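(* Let $X$ be a locally compact Hausdorff space, $Y\subseteq X$ a subset, and $\mathcal{F}=\{U\in\mathcal{O}(X):Y\subseteq U\}$. Then $\mathcal{F}$ is an m-filter which is 1-step over $\mathcal{O}(X)$, and for $U,V\in\mathcal{O}(X)$ we have $\overline U=\overline V$ in $\mathcal{O}(X)_\mathcal{F}$ if and only if $U\cap Y=V\cap Y$.
   Context: $\mathcal{O}(X)$ is the quantale of open subsets of $X$ (order inclusion, join union, multiplication intersection, top $X$); it is a module over itself. An m-filter is a subset containing $X$, upward closed and closed under intersection. For $\mathcal{F}$ an m-filter and $U,V\in\mathcal{O}(X)$: $U\preceq^1_\mathcal{F}V$ means there are open sets $U_i$ and $S_i\in\mathcal{F}$ ($i\in I$) with $U\subseteq\bigcup_iU_i$ and $S_i\cap U_i\subseteq V$; $U\preceq^n_\mathcal{F}V$ means a chain of $n$ such steps; $U\preceq_\mathcal{F}V$ means $U\preceq^n_\mathcal{F}V$ for some $n\ge1$. $\mathcal{O}(X)_\mathcal{F}$ is $\mathcal{O}(X)$ modulo $U\sim V\iff U\preceq_\mathcal{F}V\preceq_\mathcal{F}U$, with classes $\overline U$. $\mathcal{F}$ is 1-step over $\mathcal{O}(X)$ if $U\preceq_\mathcal{F}V$ implies $U\preceq^1_\mathcal{F}V$. *)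

(* Defs.v *)
From mathcomp Require Import all_boot all_order.
From mathcomp Require Import all_classical all_reals all_analysis.
Set Implicit Arguments. Unset Strict Implicit. Unset Printing Implicit Defensive.
Local Open Scope classical_set_scope.

Section Quantale.
Variable X : topologicalType.

(* A subset of O(X): a predicate on sets of X, required to consist of open sets. *)
(* m-filter: subset of O(X) containing X (top), upward closed in O(X),
   closed under intersection (the quantale multiplication). *)
Definition mfilter (F : set X -> Prop) : Prop :=
  (forall U, F U -> open U) /\
  F setT /\
  (forall U V, open U -> open V -> U `<=` V -> F U -> F V) /\
  (forall U V, F U -> F V -> F (U `&` V)).

Definition prec1 (F : set X -> Prop) (U V : set X) : Prop :=
  exists (I : Type) (Ui Si : I -> set X),
    (forall i, open (Ui i)) /\ (forall i, F (Si i)) /\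
    U `<=` \bigcup_i Ui i /\ (forall i, Si i `&` Ui i `<=` V).

(* U <=^n_F V : a chain of n steps through open sets (precn 0 is equality,
   only n >= 1 is used). *)
Fixpoint precn (F : set X -> Prop) (n : nat) (U V : set X) : Prop :=
  match n with
  | 0 => U = V
  | n'.+1 => exists W, open W /\ precn F n' U W /\ prec1 F W V
  end.

Definition prec (F : set X -> Prop) (U V : set X) : Prop :=
  exists n, (1 <= n)%N /\ precn F n U V.

(* the relation U ~ V defining O(X)_F; classes coincide iff related *)
Definition equivF (F : set X -> Prop) (U V : set X) : Prop :=
  prec F U V /\ prec F V U.

Definition one_step (F : set X -> Prop) : Prop :=
  forall U V, open U -> open V -> prec F U V -> prec1 F U V.

End Quantale.

(* Main.v *)
Require Import Defs.
From mathcomp Require Import all_boot all_order.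
From mathcomp Require Import all_classical all_reals all_analysis.
Local Open Scope classical_set_scope.

Lemma reg_aux (X : topologicalType) : hausdorff_space X -> locally_compact [set: X] ->
  forall (U : set X) x, open U -> U x -> exists W K : set X, [/\ open W, closed K, W x, W `<=` K & K `<=` U].
Proof.
move=> hX lc U x oU Ux.
have [//|C CWx [cptC clC]] := lc x; rewrite withinET in CWx.
have R := compact_regular hX cptC CWx.
have := R U (open_nbhs_nbhs (conj oU Ux)).
case => B Bx BU.
exists (interior B), (closure B); split => //.
- exact: open_interior.
- exact: closed_closure.
- exact: subset_trans (@interior_subset _ _) (@subset_closure _ _).
Qed.

Lemma sound_aux (X : topologicalType) (Y : set X) n (U V : set X) :
  precn (fun U : set X => open U /\ Y `<=` U) n U V -> U `&` Y `<=` V.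
Proof.
elim: n V => [|n IH] V /=; first by move=> -> x [].
move=> [W [oW [hUW [I [Ui [Si [oUi [FS [cov sub]]]]]]]]] x [Ux Yx].
have Wx := IH W hUW x (conj Ux Yx).
have [i _ Uix] := cov x Wx.
apply: (sub i); split => //; exact: (FS i).2.
Qed.

Lemma complete_aux (X : topologicalType) (Y : set X) :
  hausdorff_space X -> locally_compact [set: X] ->
  forall U V : set X, open U -> open V -> U `&` Y `<=` V ->
  prec1 (fun U : set X => open U /\ Y `<=` U) U V.
Proof.
move=> hX lc U V oU oV UYV.
have : forall x : X, exists p : set X * set X,
    [/\ open p.1, closed p.2, p.1 `<=` p.2, p.2 `<=` U & (U x -> p.1 x)].
  move=> x; have [Ux|nUx] := pselect (U x).
    have [W [K [oW cK Wx WK KU]]] := @reg_aux X hX lc U x oU Ux.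
    by exists (W, K); split.
  exists (set0, set0); split => //=; [exact: open0|exact: closed0].
move=> /choice [f hf].
exists X, (fun x => (f x).1), (fun x => ~` ((f x).2 `&` ~` V)).
split; first by move=> x; have [] := hf x.
split.
  move=> x; have [h1 h2 h3 h4 _] := hf x; split.
    by apply: closed_openC; apply: closedI => //; rewrite closedC.
  move=> y Yy [Ky nVy]; apply: nVy; apply: UYV; split => //; exact: h4.
split.
  move=> x Ux; exists x => //; have [_ _ _ _ h] := hf x; exact: h.
move=> x y [nK U1y]; have [_ _ s12 _ _] := hf x.
apply: contrapT => nVy; apply: nK; split => //; exact: s12.
Qed.

Theorem mainTheorem16 (X : topologicalType) (Y : set X) :
  hausdorff_space X -> locally_compact [set: X] ->
  let F := fun U : set X => open U /\ Y `<=` U in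
  mfilter F /\ one_step F /\
  (forall U V : set X, open U -> open V ->
     (equivF F U V <-> U `&` Y = V `&` Y)).
Proof.
move=> hX lc F.
have prec_sound : forall U V, prec F U V -> U `&` Y `<=` V.
  by move=> U V [n [_ h]]; exact: (@sound_aux X Y n U V h).
have one1 : forall U V, open U -> open V -> U `&` Y `<=` V -> prec F U V.
  move=> U V oU oV h; exists 1%N; split => //=.
  by exists U; split => //; split => //; exact: complete_aux.
split.
  split; first by move=> U [].
  split; first by split => //; exact: openT.
  split; first by move=> U V _ oV UV [_ YU]; split => //; exact: subset_trans YU UV.
  by move=> U V [oU YU] [oV YV]; split; [exact: openI|move=> y Yy; split; [exact: YU|exact: YV]].
split.
  by move=> U V oU oV /prec_sound h; exact: complete_aux.
move=> U V oU oV; split.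
  move=> [/prec_sound h1 /prec_sound h2]; apply/seteqP; split => x [a b]; split => //.
    exact: h1.
  exact: h2.
move=> e; split; apply: one1 => // x hx.
  by have := hx; rewrite e => -[].
by have := hx; rewrite -e => -[].
Qed.
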